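(* Let $n$ be an integer, $p$ a prime dividing $2n+1$, $K$ a number field containing a root $\omega$ of $\Delta_n=S_n'S_{n-1}-S_nS_{n-1}'$, and $v$ a valuation on $K$ with $v(p)=1$. Then $v(S_{n-1}(\omega))=0$.
   Context: The Chebyshev polynomials $S_j(\omega)$ are defined for all integers $j$ by $S_0=1$, $S_1=\omega$, $S_{j+1}=\omega S_j-S_{j-1}$; primes denote derivatives with respect to $\omega$. *)

(* Defs.v *)
From HB Require Import structures.
From mathcomp Require Import all_boot all_order all_algebra all_field.
Set Implicit Arguments. Unset Strict Implicit. Unset Printing Implicit Defensive.
Import Order.TTheory GRing.Theory Num.Theory.
Local Open Scope ring_scope.

Fixpoint chebS_nat (R : nzRingType) (j : nat) : {poly R} :=
  match j with
  | 0%N => 1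
  | 1%N => 'X
  | (k.+1 as j1).+1 => 'X * chebS_nat R j1 - chebS_nat R k
  end.

(* S_j for all integers j, extending the recurrence S_{j+1} = X S_j - S_{j-1}
   backwards: S_{-1} = 0 and S_{-k} = - S_{k-2} for k >= 2. *)
Definition chebS (R : nzRingType) (j : int) : {poly R} :=
  match j with
  | Posz k => chebS_nat R k
  | Negz 0 => 0
  | Negz k.+1 => - chebS_nat R k
  end.

Definition chebDelta (R : nzRingType) (n : int) : {poly R} :=
  (chebS R n)^`() * chebS R (n - 1) - chebS R n * (chebS R (n - 1))^`().

(* A (real-valued, additively written) valuation on a field K:
   v is defined on nonzero elements; v(0) = +oo is implicit. *)
Definition is_valuation (K : fieldType) (G : realFieldType) (v : K -> G) : Prop :=
  (forall x y : K, x != 0 -> y != 0 -> v (x * y) = v x + v y) /\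
  (forall x y : K, x != 0 -> y != 0 -> x + y != 0 -> Num.min (v x) (v y) <= v (x + y)).

(* Main.v *)
Require Import Defs.
From HB Require Import structures.
From mathcomp Require Import all_boot all_order all_algebra all_field.
From mathcomp Require Import zify ring lra.
Import Order.TTheory GRing.Theory Num.Theory.
Local Open Scope ring_scope.

Lemma two_sided (P : int -> Prop) : P 0 -> P (-1) ->
  (forall m, P m -> P (m-1) -> P (m+1)) -> (forall m, P m -> P (m+1) -> P (m-1)) ->
  forall m, P m.
Proof.
move=> P0 Pm1 Hf Hb.
have Pos : forall k : nat, P k /\ P k.+1.
  elim=> [|k [IH1 IH2]].
    by split=> //; have := Hf 0 P0 Pm1.
  split=> //; have := Hf k.+1 IH2.
  have -> : (Posz k.+1 - 1 = k)%R by lia.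
  have -> : (Posz k.+1 + 1 = k.+2)%R by lia.
  by apply.
have Neg : forall k : nat, P (Negz k) /\ P (Negz k.+1).
  elim=> [|k [IH1 IH2]].
    have e : Negz 1 = -1 - 1 by [].
    by split=> //; rewrite e; apply: Hb Pm1 _.
  split=> //; have := Hb (Negz k.+1) IH2.
  have -> : (Negz k.+1 - 1 = Negz k.+2)%R by rewrite !NegzE; lia.
  have -> : (Negz k.+1 + 1 = Negz k)%R by rewrite !NegzE; lia.
  by apply.
by case=> k; [case: (Pos k)|case: (Neg k)].
Qed.

Section P.
Variable R : comNzRingType.
Local Notation S := (chebS R).

Lemma chebS_rec (m : int) : S (m + 1) = 'X * S m - S (m - 1).
Proof.
case: m => [[|[|k]]|[|[|k]]].
- by rewrite /= mulr1 subr0.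
- by rewrite /=.
- have -> : (Posz k.+2 + 1 = Posz k.+3) by lia.
  by have -> : (Posz k.+2 - 1 = Posz k.+1) by lia.
- by rewrite /= mulr0 sub0r opprK.
- by rewrite /=; ring.
- have -> : (Negz k.+2 + 1 = Negz k.+1)%R by rewrite !NegzE; lia.
  have -> : (Negz k.+2 - 1 = Negz k.+3)%R by rewrite !NegzE; lia.
  rewrite /=; ring.
Qed.

Definition Eq (m : int) : {poly R} :=
  ('X ^+ 2 - 4) * (S m)^`() - m%:~R * 'X * S m + 2 * (m+1)%:~R * S (m-1).

Lemma Erec m : Eq (m+1) = 'X * Eq m - Eq (m-1).
Proof.
rewrite /Eq addrK subrK.
have h1 := chebS_rec m.
have h2 := chebS_rec (m-1); rewrite subrK in h2.
have h3 : S (m - 1 - 1) = 'X * S (m-1) - S m by rewrite h2; ring.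
rewrite h1 h3 derivB derivM derivX mul1r !intrD ?intrB.
ring.
Qed.

Lemma Eq0 m : Eq m = 0.
Proof.
move: m; apply: two_sided.
- rewrite /Eq /= derivC; ring.
- rewrite /Eq /= derivC; ring.
- by move=> m h1 h2; rewrite Erec h1 h2 mulr0 subr0.
- move=> m h1 h2; have := Erec m; rewrite h1 h2 mulr0 sub0r => /eqP.
  by rewrite eq_sym oppr_eq0 => /eqP.
Qed.

Lemma cassini m : S m * S m - S (m+1) * S (m-1) = 1.
Proof.
pose C m := S m * S m - S (m+1) * S (m-1) - 1.
have Crec : forall m, C (m+1) = C m.
  move=> k; rewrite /C addrK (chebS_rec (k+1)) addrK (chebS_rec k); ring.
suff : C m = 0 by move/eqP; rewrite subr_eq0 => /eqP.
move: m; apply: two_sided.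
- by rewrite /C /=; ring.
- by rewrite /C /=; ring.
- by move=> m h _; rewrite Crec.
- by move=> m _ h; rewrite -h -{2}(subrK 1 m) Crec.
Qed.

Lemma delta_id n : ('X ^+ 2 - 4) * chebDelta R n =
  S (n-1) * ('X * S n - 2 * S (n-1)) - (2 * n)%:~R.
Proof.
have e1 := Eq0 n. have e2 := Eq0 (n-1). have c := cassini (n-1).
rewrite /Eq subrK in e1 e2 c.
rewrite /chebDelta.
move: e1 e2 c.
set a := (chebS R n)^`(); set b := (chebS R (n-1))^`().
set x := chebS R n; set y := chebS R (n-1); set z := chebS R (n-1-1).
move=> e1 e2 c.
transitivity ((('X ^+ 2 - 4) * a - n%:~R * 'X * x + 2 * (n + 1)%:~R * y) * y
  - x * (('X ^+ 2 - 4) * b - (n - 1)%:~R * 'X * y + 2 * n%:~R * z)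
  + (y * ('X * x - 2 * y) - (2 * n)%:~R) + (2 * n)%:~R * (1 - (y * y - x * z))).
  ring.
rewrite e1 e2 c; ring.
Qed.
End P.
Lemma charK (K : fieldExtType rat) (z : int) : (z%:~R : K) = 0 -> z = 0.
Proof.
move=> h; have : in_alg K (z%:~R) = in_alg K 0 by rewrite rmorph_int rmorph0.
by move/fmorph_inj/eqP; rewrite intr_eq0 => /eqP.
Qed.

Section V.
Variables (K : fieldType) (G : realFieldType) (v : K -> G).
Hypothesis hv : is_valuation v.

Lemma v1 : v 1 = 0.
Proof. have := hv.1 1 1 (oner_neq0 _) (oner_neq0 _); rewrite mulr1; lra. Qed.

Lemma vN1 : v (-1) = 0.
Proof.
have n1 : (-1 : K) != 0 by rewrite oppr_eq0 oner_neq0.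
have := hv.1 _ _ n1 n1; rewrite mulrNN mulr1 v1; lra.
Qed.

Lemma vN x : x != 0 -> v (- x) = v x.
Proof.
move=> x0; have n1 : (-1 : K) != 0 by rewrite oppr_eq0 oner_neq0.
by rewrite -mulN1r (hv.1 _ _ n1 x0) vN1 add0r.
Qed.

Lemma vM x y : x != 0 -> y != 0 -> v (x * y) = v x + v y.
Proof. exact: hv.1. Qed.

Lemma vstrict x y : x != 0 -> y != 0 -> v x < v y -> x + y != 0 /\ v (x + y) = v x.
Proof.
move=> x0 y0 lt.
have xy0 : x + y != 0.
  apply/negP => /eqP h; have : y = - x by apply/eqP; rewrite -addr_eq0 addrC h.
  by move=> e; move: lt; rewrite e vN // ltxx.
split=> //.
have h1 := hv.2 _ _ x0 y0 xy0.
have my0 : - y != 0 by rewrite oppr_eq0.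
have h2 := hv.2 _ _ xy0 my0; rewrite addrK (vN _ y0) in h2.
move: h1 (h2 x0); rewrite !ge_min => /orP[a|a] /orP[c|c]; lra.
Qed.

Definition I x := x = 0 \/ 0 <= v x.

Lemma Iv x : x != 0 -> I x -> 0 <= v x.
Proof. by move=> x0 [e|//]; rewrite e eqxx in x0. Qed.

Lemma I0 : I 0. Proof. by left. Qed.
Lemma I1 : I 1. Proof. by right; rewrite v1. Qed.
Lemma Iopp x : I x -> I (- x).
Proof. case: (eqVneq x 0) => [->|x0]; first by rewrite oppr0; left. by move/(Iv _ x0) => h; right; rewrite vN. Qed.
Lemma Imul x y : I x -> I y -> I (x * y).
Proof.
case: (eqVneq x 0) => [->|x0]; first by rewrite mul0r; left.
case: (eqVneq y 0) => [->|y0]; first by rewrite mulr0; left.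
move=> /(Iv _ x0) hx /(Iv _ y0) hy; right; rewrite vM //; lra.
Qed.
Lemma Iadd x y : I x -> I y -> I (x + y).
Proof.
case: (eqVneq x 0) => [->|x0]; first by rewrite add0r.
case: (eqVneq y 0) => [->|y0]; first by rewrite addr0.
case: (eqVneq (x + y) 0) => [->|xy0]; first by left.
move=> /(Iv _ x0) hx /(Iv _ y0) hy; right; have := hv.2 _ _ x0 y0 xy0; rewrite ge_min.
case/orP; lra.
Qed.
Lemma Inat k : I k%:R.
Proof. elim: k => [|k IH]; first exact: I0. by rewrite -natr1; apply: Iadd IH I1. Qed.
Lemma Iint z : I z%:~R.
Proof. case: z => k; first exact: Inat. by rewrite NegzE mulrNz; apply/Iopp/Inat. Qed.


Lemma chebSS k : chebS_nat K k.+2 = 'X * chebS_nat K k.+1 - chebS_nat K k.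
Proof. by []. Qed.

Lemma Icheb w : I w -> forall k, I (chebS K k).[w].
Proof.
move=> Iw.
have hn : forall k, I (chebS_nat K k).[w] /\ I (chebS_nat K k.+1).[w].
  elim=> [|k [IH1 IH2]]; first by rewrite /= hornerC hornerX; split=> //; exact: I1.
  split=> //; rewrite chebSS !hornerE.
  by apply: Iadd; [apply: Imul|apply: Iopp].
case=> k; first by case: (hn k).
case: k => [|k]; first by rewrite /= horner0; exact: I0.
by rewrite /= hornerN; apply: Iopp; case: (hn k).
Qed.

Lemma dom w : w != 0 -> v w < 0 -> forall k,
  (chebS_nat K k).[w] != 0 /\ v (chebS_nat K k).[w] = k%:R * v w.
Proof.
move=> w0 vw.
suff : forall k, ((chebS_nat K k).[w] != 0 /\ v (chebS_nat K k).[w] = k%:R * v w) /\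
  ((chebS_nat K k.+1).[w] != 0 /\ v (chebS_nat K k.+1).[w] = k.+1%:R * v w).
  by move=> h k; case: (h k).
elim=> [|k [[a1 a2] [b1 b2]]].
  rewrite /= hornerC hornerX mul0r mul1r v1; do !split=> //; exact: oner_neq0.
split=> //; rewrite chebSS !hornerE.
have x0 : w * (chebS_nat K k.+1).[w] != 0 by rewrite mulf_neq0.
have y0 : - (chebS_nat K k).[w] != 0 by rewrite oppr_eq0.
have vx : v (w * (chebS_nat K k.+1).[w]) = k.+2%:R * v w.
  by rewrite vM // b2 -!natr1; ring.
have := vstrict _ _ x0 y0; rewrite vx vN // a2 -!natr1 => h.
have [] := h; first nra.
by move=> -> ->.
Qed.

Lemma vunit (p : nat) (q : int) (c : K) : v p%:R = 1 ->
  c = q%:~R * p%:R - 1 -> c != 0 -> v c = 0.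
Proof.
move=> vp ce c0.
have Ic : I c by rewrite ce; apply: Iadd; [apply: Imul; [apply: Iint|apply: Inat]|apply/Iopp/I1].
have h0 := Iv _ c0 Ic.
case: (leP (v c) 0) => [h|h]; first lra.
case: (eqVneq (q%:~R * p%:R : K) 0) => [A0|A0].
  by move: h; rewrite ce A0 sub0r vN1 ltxx.
have [q0 p0] : q%:~R != 0 :> K /\ p%:R != 0 :> K.
  by move: A0; rewrite mulf_eq0 negb_or => /andP.
have vA : v (q%:~R * p%:R) = v q%:~R + 1 by rewrite vM // vp.
have vq := Iv _ q0 (Iint q).
have mc0 : - c != 0 by rewrite oppr_eq0.
have e1 : q%:~R * p%:R + - c = 1 by rewrite ce opprB addrC subrK.
have s0 : q%:~R * p%:R + - c != 0 by rewrite e1 oner_neq0.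
have := hv.2 _ _ A0 mc0 s0; rewrite e1 v1 vA (vN _ c0) ge_min => /orP[]; lra.
Qed.

Lemma dom2 w : w != 0 -> v w < 0 -> forall k,
  (chebS_nat K k.+2).[w] - (chebS_nat K k).[w] != 0 /\ v ((chebS_nat K k.+2).[w] - (chebS_nat K k).[w]) = k.+2%:R * v w.
Proof.
move=> w0 vw k.
have [a1 a2] := dom _ w0 vw k.+2. have [b1 b2] := dom _ w0 vw k.
have y0 : - (chebS_nat K k).[w] != 0 by rewrite oppr_eq0.
have := vstrict _ _ a1 y0; rewrite a2 (vN _ b1) b2 -!natr1 => h.
have [] := h; first nra.
by move=> -> ->.
Qed.

Lemma negcase w n : w != 0 -> v w < 0 -> n != 0 -> n != -1 ->
  (chebS K (n-1)).[w] != 0 /\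
  w * (chebS K n).[w] - (1+1) * (chebS K (n-1)).[w] != 0 /\
  v (chebS K (n-1)).[w] + v (w * (chebS K n).[w] - (1+1) * (chebS K (n-1)).[w]) < 0.
Proof.
move=> w0 vw.
case: n => [[|m]|[|j]] // _ _.
- have -> : (Posz m.+1 - 1 = Posz m)%R by lia.
  change (chebS K (Posz m)) with (chebS_nat K m).
  change (chebS K (Posz m.+1)) with (chebS_nat K m.+1).
  have -> : w * (chebS_nat K m.+1).[w] - (1 + 1) * (chebS_nat K m).[w] =
    (chebS_nat K m.+2).[w] - (chebS_nat K m).[w] by rewrite chebSS !hornerE; ring.
  have [a1 a2] := dom _ w0 vw m. have [b1 b2] := dom2 _ w0 vw m.
  do !split => //; have hm : 0 <= m%:R :> G := ler0n _ _. rewrite a2 b2 -!natr1; nra.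
- have -> : (Negz j.+1 - 1 = Negz j.+2)%R by rewrite !NegzE; lia.
  change (chebS K (Negz j.+2)) with (- chebS_nat K j.+1).
  change (chebS K (Negz j.+1)) with (- chebS_nat K j).
  rewrite !hornerN.
  case: j => [|j].
    have e1 : (chebS_nat K 1).[w] = w by rewrite /= hornerX.
    have e0 : (chebS_nat K 0).[w] = 1 by rewrite /= hornerC.
    rewrite e1 e0.
    have -> : w * - 1 - (1 + 1) * - w = w by ring.
    have mw : - w != 0 by rewrite oppr_eq0.
    do !split => //; rewrite (vN _ w0); lra.
  have -> : w * - (chebS_nat K j.+1).[w] - (1 + 1) * - (chebS_nat K j.+2).[w] =
    (chebS_nat K j.+2).[w] - (chebS_nat K j).[w] by rewrite chebSS !hornerE; ring.
  have [a1 a2] := dom _ w0 vw j.+2. have [b1 b2] := dom2 _ w0 vw j.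
  have ma : - (chebS_nat K j.+2).[w] != 0 by rewrite oppr_eq0.
  do !split => //; have hm : 0 <= j%:R :> G := ler0n _ _. rewrite (vN _ a1) a2 b2 -!natr1; nra.
Qed.

End V.

Theorem lemma5p6 (n : int) (p : nat) (K : fieldExtType rat) (G : realFieldType)
    (omega : K) (v : K -> G) :
  prime p -> (p%:Z %| 2 * n + 1)%Z ->
  root (chebDelta K n) omega ->
  is_valuation v -> v (p%:R) = 1 ->
  (chebS K (n - 1)).[omega] != 0 /\ v (chebS K (n - 1)).[omega] = 0.
Proof.
move=> pr hp hroot hval vp.
have hid := congr1 (fun q => q.[omega]) (delta_id K n).
move: hroot; rewrite rootE => /eqP hr.
rewrite /= hornerM hr mulr0 !hornerE in hid.
have hi : ((2*n)%:~R : {poly K}).[omega] = (2*n)%:~R by exact: horner_int.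
rewrite hi in hid.
set sv := (chebS K (n-1)).[omega] in hid *.
set sn := (chebS K n).[omega] in hid.
set tv := omega * sn - (1+1) * sv in hid.
have hprod : sv * tv = (2*n)%:~R by move/eqP: hid; rewrite eq_sym subr_eq0 => /eqP.
case/dvdzP: (hp) => q hq.
have ce : ((2*n)%:~R : K) = q%:~R * p%:R - 1.
  have -> : 2 * n = q * p - 1 by lia.
  by rewrite intrB intrM.
have hn0 : n != 0.
  apply/eqP => e; move: hp; rewrite e dvdzE /= dvdn1 => /eqP p1.
  by rewrite p1 in pr.
have hn1 : n != -1.
  apply/eqP => e; move: hp; rewrite e dvdzE /= dvdn1 => /eqP p1.
  by rewrite p1 in pr.
have c0 : ((2*n)%:~R : K) != 0.
  by apply/eqP => /charK; lia.
have vc := vunit _ _ _ hval _ _ _ vp ce c0.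
have : sv * tv != 0 by rewrite hprod.
rewrite mulf_eq0 negb_or => /andP[sv0 tv0].
have vst : v sv + v tv = 0 by rewrite -(vM _ _ _ hval) // hprod vc.
have Iom : I _ _ v omega.
  case: (eqVneq omega 0) => [->|w0]; first exact: (I0 _ _ v).
  case: (leP 0 (v omega)) => [h|h]; first by right.
  have [_ [_ hlt]] := negcase _ _ _ hval _ _ w0 h hn0 hn1.
  rewrite -/sv -/sn -/tv in hlt; lra.
have Isv : I _ _ v sv by apply: (Icheb _ _ _ hval).
have Itv : I _ _ v tv.
  apply: (Iadd _ _ _ hval); first by apply: (Imul _ _ _ hval) => //; apply: (Icheb _ _ _ hval).
  apply: (Iopp _ _ _ hval); apply: (Imul _ _ _ hval) => //.
  by apply: (Iadd _ _ _ hval); apply: (I1 _ _ _ hval).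
have h1 := Iv _ _ v _ sv0 Isv. have h2 := Iv _ _ v _ tv0 Itv.
split=> //; lra.
Qed.
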